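(* Let $n\ge 2$ and $N\ge 1$ be integers and let $p$ be a prime with $p\mid N$. Then \[ Z_n(N,p)=\frac{n!}{N}\sum_{\substack{1\le u_1<u_2<\dots<u_{n-1}<N\\ u_1,\;u_2-u_1,\;\dots,\;u_{n-1}-u_{n-2},\;u_{n-1}\in\mathcal P_p}}\frac{1}{u_1u_2\cdots u_{n-1}} . \] (Since $p\mid N$, the condition $u_{n-1}\in\mathcal P_p$ is equivalent to $N-u_{n-1}\in\mathcal P_p$.)
   Context: For a prime $p$, $\mathcal P_p$ denotes the set of positive integers not divisible by $p$. For integers $n,N\ge1$ with $p\mid N$, $Z_n(N,p):=\sum \frac{1}{l_1l_2\cdots l_n}$, the sum over all $(l_1,\dots,l_n)\in\mathcal P_p^n$ with $l_1+\dots+l_n=N$. *)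

(* Defs.v *)
From HB Require Import structures.
From mathcomp Require Import all_boot all_order all_algebra.
Set Implicit Arguments. Unset Strict Implicit. Unset Printing Implicit Defensive.
Import Order.TTheory GRing.Theory Num.Theory.
Local Open Scope ring_scope.

Definition inPp (p l : nat) : bool := (0 < l)%N && ~~ (p %| l)%N.

(* Z_n(N,p) = sum over (l_1,...,l_n) in P_p^n with l_1+...+l_n = N of 1/(l_1...l_n).
   Each l_i lies in [1,N], so we range over l : {ffun 'I_n -> 'I_N.+1}. *)
Definition Z (n N p : nat) : rat :=
  \sum_(l : {ffun 'I_n -> 'I_N.+1} |
          [forall i, inPp p (l i)] && ((\sum_i (l i : nat))%N == N))
     (\prod_i ((l i : nat)%:R)^-1).

Definition useq (m N : nat) (u : {ffun 'I_m -> 'I_N}) : seq nat :=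
  [seq (nat_of_ord (u j)) | j <- enum 'I_m].

Definition prev_u (m N : nat) (u : {ffun 'I_m -> 'I_N}) (i : 'I_m) : nat :=
  if (i : nat) is k.+1 then nth 0%N (useq u) k else 0%N.

(* The right-hand sum of Lemma 2.1: over 1 <= u_1 < ... < u_{m} < N (m = n-1),
   with u_1, u_2-u_1, ..., u_m-u_{m-1}, u_m all in P_p, of 1/(u_1...u_m). *)
Definition RHS_sum (m N p : nat) : rat :=
  \sum_(u : {ffun 'I_m -> 'I_N} |
          [forall i, (prev_u u i < u i)%N && inPp p (u i - prev_u u i)]
          && [forall i : 'I_m, ((i : nat) == m.-1) ==> inPp p (u i)])
     (\prod_i ((u i : nat)%:R)^-1).

(* Main.v *)
Require Import Defs.
From HB Require Import structures.
From mathcomp Require Import all_boot all_order all_algebra perm zify.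
Import Order.TTheory GRing.Theory Num.Theory.
Set Implicit Arguments. Unset Strict Implicit. Unset Printing Implicit Defensive.
Local Open Scope ring_scope.

Definition ext n (T : finType) (l : {ffun 'I_n -> T}) (x : T) : {ffun 'I_n.+1 -> T} :=
  [ffun i => if unlift ord_max i is Some j then l j else x].

Lemma ext_max n (T : finType) (l : {ffun 'I_n -> T}) x : ext l x ord_max = x.
Proof. by rewrite ffunE unlift_none. Qed.

Lemma ext_widen n (T : finType) (l : {ffun 'I_n -> T}) x j :
  ext l x (widen_ord (leqnSn n) j) = l j.
Proof.
have -> : widen_ord (leqnSn n) j = lift ord_max j by apply: val_inj; rewrite /= /bump leqNgt ltn_ord.
by rewrite ffunE liftK.
Qed.

Lemma sum_split n (T : finType) (F : {ffun 'I_n.+1 -> T} -> rat) :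
  \sum_(l : {ffun 'I_n.+1 -> T}) F l =
  \sum_(x : T) \sum_(l : {ffun 'I_n -> T}) F (ext l x).
Proof.
rewrite pair_big /=.
rewrite (reindex (fun q : T * {ffun 'I_n -> T} => ext q.2 q.1)) //.
apply: onW_bij.
exists (fun l : {ffun 'I_n.+1 -> T} => (l ord_max, [ffun j => l (widen_ord (leqnSn n) j)])).
- move=> [x l] /=; rewrite ext_max; congr pair; apply/ffunP=> j; by rewrite ffunE ext_widen.
- move=> l; apply/ffunP=> i; rewrite ffunE /=.
  case: unliftP => [j ->|->] //; rewrite ffunE; congr (l _); apply: val_inj; by rewrite /= /bump leqNgt ltn_ord.
Qed.

Lemma ext_lift n (T : finType) (l : {ffun 'I_n -> T}) x j :
  ext l x (lift ord_max j) = l j.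
Proof. by rewrite ffunE liftK. Qed.

Lemma forall_ext n (T : finType) (l : {ffun 'I_n -> T}) x (P : pred T) :
  [forall i, P (ext l x i)] = [forall j, P (l j)] && P x.
Proof.
apply/forallP/andP.
- move=> H; split; last by have := H ord_max; rewrite ext_max.
  by apply/forallP => j; have := H (widen_ord (leqnSn n) j); rewrite ext_widen.
- case=> /forallP H1 H2 i; case: (unliftP ord_max i) => [j ->|->].
  + by rewrite ext_lift.
  + by rewrite ext_max.
Qed.

Lemma sum_ext n B (l : {ffun 'I_n -> 'I_B}) x :
  (\sum_i (ext l x i : nat) = \sum_j (l j : nat) + x)%N.
Proof.
rewrite big_ord_recr /= ext_max; congr addn; apply: eq_bigr => j _; by rewrite ext_widen.
Qed.

Definition psn n (f : 'I_n -> nat) (k : nat) : nat := (\sum_(i < n | (i <= k)%N) f i)%N.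

Lemma psn_ext n B (l : {ffun 'I_n -> 'I_B}) x k : (k < n)%N ->
  psn (fun i => (ext l x i : nat)) k = psn (fun i => (l i : nat)) k.
Proof.
move=> hk; rewrite /psn big_mkcond big_ord_recr /= ext_max.
have -> : (n <= k)%N = false by apply/negbTE; rewrite -ltnNge.
rewrite addn0 [RHS]big_mkcond; apply: eq_bigr => i _; by rewrite ext_widen.
Qed.

Lemma psn_full n (f : 'I_n.+1 -> nat) : psn f n = (\sum_i f i)%N.
Proof. by rewrite /psn; apply: eq_bigl => i; rewrite -ltnS ltn_ord. Qed.

Section Main.
Variables p B : nat.

Definition Pl n M (l : {ffun 'I_n -> 'I_B.+1}) : bool :=
  [forall i, inPp p (l i)] && (\sum_i (l i : nat) == M)%N.

Definition Fs n M : rat := \sum_(l : {ffun 'I_n -> 'I_B.+1} | Pl M l) \prod_i ((l i : nat)%:R)^-1.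

Definition Gs n M : rat := \sum_(l : {ffun 'I_n -> 'I_B.+1} | Pl M l)
   \prod_(k < n) ((psn (fun i => (l i : nat)) k)%:R)^-1.

Lemma Pl_ext n M (l : {ffun 'I_n -> 'I_B.+1}) x :
  Pl M (ext l x) = inPp p x && (x <= M)%N && Pl (M - x)%N l.
Proof.
rewrite /Pl (forall_ext _ _ (fun y : 'I_B.+1 => inPp p y)) sum_ext.
case: [forall j, inPp p (l j)]; case: (inPp p x); rewrite ?andbF //=.
apply/eqP/andP => [h|[h1 /eqP h2]]; [split; [|apply/eqP]|]; lia.
Qed.

Lemma Pl_tperm n M (l : {ffun 'I_n -> 'I_B.+1}) (j k : 'I_n) :
  Pl M [ffun i => l (tperm j k i)] = Pl M l.
Proof.
rewrite /Pl; congr andb.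
- apply/forallP/forallP => H i.
  + by have := H (tperm j k i); rewrite ffunE tpermK.
  + by rewrite ffunE.
- congr eq_op; rewrite [RHS](reindex_inj (@perm_inj _ (tperm j k))).
  by apply: eq_bigr => i _; rewrite ffunE.
Qed.

Lemma sym_term n M (j : 'I_n.+1) :
  \sum_(l : {ffun 'I_n.+1 -> 'I_B.+1} | Pl M l) (((l j : nat)%:R : rat) * \prod_i ((l i : nat)%:R)^-1) =
  \sum_(l : {ffun 'I_n.+1 -> 'I_B.+1} | Pl M l) ((l ord_max : nat)%:R * \prod_i ((l i : nat)%:R)^-1).
Proof.
pose h := fun l : {ffun 'I_n.+1 -> 'I_B.+1} => [ffun i => l (tperm j ord_max i)].
have hK : cancel h h by move=> l; apply/ffunP => i; rewrite !ffunE tpermK.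
rewrite (reindex_inj (can_inj hK)); apply: eq_big => l; first by rewrite Pl_tperm.
move=> _; rewrite /h ffunE tpermL; congr (_ * _).
rewrite [RHS](reindex_inj (@perm_inj _ (tperm j ord_max))).
by apply: eq_bigr => i _; rewrite ffunE.
Qed.


Lemma Pl_pos n M (l : {ffun 'I_n -> 'I_B.+1}) i : Pl M l -> (0 < l i)%N.
Proof. by case/andP => /forallP /(_ i) /andP []. Qed.

Lemma Pl_sum n M (l : {ffun 'I_n -> 'I_B.+1}) : Pl M l -> (\sum_i (l i : nat))%N = M.
Proof. by case/andP => _ /eqP. Qed.

Lemma stepA n M : M%:R * Fs n.+1 M =
  n.+1%:R * \sum_(x : 'I_B.+1 | inPp p x && (x <= M)%N) Fs n (M - x)%N.
Proof.
rewrite /Fs mulr_sumr.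
transitivity (\sum_(l : {ffun 'I_n.+1 -> 'I_B.+1} | Pl M l)
   \sum_j (((l j : nat)%:R : rat) * \prod_i ((l i : nat)%:R)^-1)).
  apply: eq_bigr => l hl; by rewrite -mulr_suml -natr_sum (Pl_sum hl).
rewrite exchange_big /=.
rewrite (eq_bigr (fun _ => \sum_(l : {ffun 'I_n.+1 -> 'I_B.+1} | Pl M l)
   (((l ord_max : nat)%:R : rat) * \prod_i ((l i : nat)%:R)^-1))); last by move=> j _; exact: sym_term.
rewrite sumr_const card_ord -[in LHS]mulr_natl; congr (_ * _).
transitivity (\sum_(l : {ffun 'I_n.+1 -> 'I_B.+1} | Pl M l)
   \prod_(i < n) ((l (widen_ord (leqnSn n) i) : nat)%:R : rat)^-1).
  apply: eq_bigr => l hl; rewrite big_ord_recr /= mulrC -mulrA mulVf ?mulr1 //.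
  by rewrite pnatr_eq0 -lt0n (Pl_pos _ hl).
rewrite big_mkcond sum_split [RHS]big_mkcond; apply: eq_bigr => x _.
rewrite /= big_mkcond /=.
case hx: (inPp p x && (x <= M)%N) => /=.
  rewrite [RHS]big_mkcond; apply: eq_bigr => l _; rewrite Pl_ext hx /=.
  case: (Pl _ l) => //; apply: eq_bigr => i _; by rewrite ext_widen.
by rewrite big1 // => l _; rewrite Pl_ext hx.
Qed.


Lemma stepB n M : Gs n.+1 M =
  (M%:R)^-1 * \sum_(x : 'I_B.+1 | inPp p x && (x <= M)%N) Gs n (M - x)%N.
Proof.
rewrite /Gs.
transitivity ((M%:R)^-1 * \sum_(l : {ffun 'I_n.+1 -> 'I_B.+1} | Pl M l)
   \prod_(k < n) ((psn (fun i => (l i : nat)) (widen_ord (leqnSn n) k))%:R : rat)^-1).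
  rewrite mulr_sumr; apply: eq_bigr => l hl; rewrite big_ord_recr /= mulrC.
  by rewrite psn_full (Pl_sum hl).
congr (_ * _).
rewrite big_mkcond sum_split [RHS]big_mkcond; apply: eq_bigr => x _.
rewrite /= big_mkcond /=.
case hx: (inPp p x && (x <= M)%N) => /=.
  rewrite [RHS]big_mkcond; apply: eq_bigr => l _; rewrite Pl_ext hx /=.
  case: (Pl _ l) => //; apply: eq_bigr => i _; by rewrite psn_ext.
by rewrite big1 // => l _; rewrite Pl_ext hx.
Qed.

Lemma Pl0 n (l : {ffun 'I_n.+1 -> 'I_B.+1}) : Pl 0 l = false.
Proof.
apply/negbTE/negP => hl; have := Pl_sum hl; move/eqP; rewrite sum_nat_eq0.
by move/forallP/(_ ord0)/eqP; move: (Pl_pos ord0 hl) => /[swap] ->.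
Qed.

Lemma FG n M : Fs n M = (n`!)%:R * Gs n M.
Proof.
elim: n M => [|n IH] M.
  rewrite /Fs /Gs mul1r; apply: eq_bigr => l _; by rewrite !big_ord0.
case: M => [|M].
  by rewrite /Fs /Gs !big_pred0 ?mulr0 // => l; rewrite Pl0.
apply: (@mulfI _ (M.+1%:R)); first by rewrite pnatr_eq0.
rewrite stepA stepB.
rewrite (eq_bigr (fun x : 'I_B.+1 => (n`!)%:R * Gs n (M.+1 - x)%N)); last by move=> x _; rewrite IH.
rewrite -mulr_sumr factS natrM mulrA.
rewrite [RHS]mulrCA; congr (_ * _).
by rewrite mulrA mulfV ?mul1r // pnatr_eq0.
Qed.

End Main.

Lemma psE n (f : 'I_n -> nat) (i : 'I_n) :
  psn f i = (f i + (if (i : nat) is k.+1 then psn f k else 0))%N.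
Proof.
rewrite /psn (bigD1 i) //=; congr addn.
case: i => [[|k] hk] /=.
  apply: big_pred0 => j; apply/negbTE/andP => [[h1 h2]]; move/negP: h2; apply.
  by apply/eqP; apply: val_inj => /=; lia.
apply: eq_bigl => j; rewrite -val_eqE /=.
by rewrite -[(j <= k)%N]ltnS ltn_neqAle andbC.
Qed.

Lemma tele n (f : 'I_n -> nat) (v : nat -> nat) :
  (forall i : 'I_n, f i + (if (i : nat) is k.+1 then v k else 0) = v i)%N ->
  forall i : 'I_n, psn f i = v i.
Proof.
move=> H [i hi] /=; elim: i hi => [|k IHk] hi.
  by rewrite (psE f (Ordinal hi)) /=; exact: (H (Ordinal hi)).
by rewrite (psE f (Ordinal hi)) /= IHk ?(ltnW hi) //; exact: (H (Ordinal hi)).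
Qed.

Lemma psn_mono n (f : 'I_n -> nat) k k' : (k <= k')%N -> (psn f k <= psn f k')%N.
Proof.
move=> hk; rewrite /psn big_mkcond [X in (_ <= X)%N]big_mkcond /=.
apply: leq_sum => i _; case: ifP => // hi; by rewrite (leq_trans hi hk).
Qed.

Lemma prev_uE m' N' (u : {ffun 'I_m'.+1 -> 'I_N'.+1}) (i : 'I_m'.+1) :
  prev_u u i = if (i : nat) is k.+1 then (u (inord k) : nat) else 0%N.
Proof.
rewrite /prev_u; case: i => [[|k] hk] //=.
rewrite /useq (nth_map ord0) ?size_enum_ord; last by lia.
congr (nat_of_ord (u _)); apply: val_inj; rewrite /= nth_enum_ord ?inordK //; lia.
Qed.

Section Step3.
Variables (p N' m' : nat).
Hypothesis hpN : (p %| N'.+1)%N.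
Local Notation N := N'.+1.
Local Notation m := m'.+1.

Definition Pu (u : {ffun 'I_m -> 'I_N}) : bool :=
  [forall i, (prev_u u i < u i)%N && inPp p (u i - prev_u u i)]
  && [forall i : 'I_m, ((i : nat) == m.-1) ==> inPp p (u i)].

Definition fd (u : {ffun 'I_m -> 'I_N}) : {ffun 'I_m -> 'I_N.+1} :=
  [ffun j => inord (u j - prev_u u j)].

Definition hmap (u : {ffun 'I_m -> 'I_N}) : {ffun 'I_m.+1 -> 'I_N.+1} :=
  ext (fd u) (inord (N - u ord_max)).

Lemma fdE u j : (fd u j : nat) = (u j - prev_u u j)%N.
Proof. rewrite ffunE inordK //; have := ltn_ord (u j); lia. Qed.

Lemma K1 u : [forall i, (prev_u u i < u i)%N] ->
  forall i : 'I_m, psn (fun j => (fd u j : nat)) i = u i.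
Proof.
move/forallP => H i.
have := @tele _ (fun j => (fd u j : nat)) (fun k => (u (inord k) : nat)).
move=> ->; first by rewrite inord_val.
move=> j; rewrite fdE -prev_uE inord_val; have := H j; lia.
Qed.

Lemma sum_fd u : [forall i, (prev_u u i < u i)%N] ->
  (\sum_j (fd u j : nat))%N = u ord_max.
Proof. by move=> H; rewrite -psn_full (K1 H ord_max). Qed.

Lemma K2 u : Pl p N (hmap u) = Pu u.
Proof.
rewrite /hmap Pl_ext /Pl /Pu.
have hN : (N - u ord_max <= N)%N by rewrite leq_subr.
rewrite (inordK (n' := N)) ?ltnS // hN andbT.
apply/idP/idP.
- case/and3P => [h1 /forallP h2 _].
  have hlt : forall i, (prev_u u i < u i)%N.
    by move=> i; have := h2 i; rewrite /inPp fdE => /andP [? _]; lia.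
  apply/andP; split.
    by apply/forallP => i; rewrite hlt /=; have := h2 i; rewrite fdE.
  apply/forallP => i; apply/implyP => /eqP hi.
  have -> : i = ord_max by apply: val_inj.
  move: h1; rewrite /inPp => /andP [_ h1]; apply/andP; split.
    have := hlt ord_max; lia.
  by rewrite -(dvdn_subr (ltnW (ltn_ord _)) hpN).
- case/andP => [/forallP h1 /forallP h2].
  have hlt : [forall i, (prev_u u i < u i)%N].
    by apply/forallP => i; case/andP: (h1 i).
  have := h2 ord_max; rewrite eqxx /= /inPp => /andP [hp0 hp1].
  apply/and3P; split.
  + apply/andP; split; first by have := ltn_ord (u ord_max); lia.
    by rewrite (dvdn_subr (ltnW (ltn_ord _)) hpN).
  + by apply/forallP => i; rewrite fdE; case/andP: (h1 i).
  + rewrite sum_fd //; apply/eqP; have := ltn_ord (u ord_max); lia.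
Qed.

Definition gmap (l : {ffun 'I_m.+1 -> 'I_N.+1}) : {ffun 'I_m -> 'I_N} :=
  [ffun k : 'I_m => inord (psn (fun i => (l i : nat)) k)].

Lemma Pu_lt u : Pu u -> [forall i, (prev_u u i < u i)%N].
Proof. by case/andP => /forallP H _; apply/forallP => i; case/andP: (H i). Qed.

Lemma K3 u : Pu u -> gmap (hmap u) = u.
Proof.
move=> hu; apply/ffunP => k; rewrite ffunE /hmap psn_ext //.
by rewrite (K1 (Pu_lt hu)) inord_val.
Qed.

Lemma K4 l : Pl p N l -> hmap (gmap l) = l.
Proof.
move=> hl.
set s := psn (fun i => (l i : nat)).
have ha : s m = N by rewrite /s psn_full (Pl_sum hl).
have hb : s m = (l ord_max + s m')%N by rewrite /s (psE _ ord_max).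
have hc := Pl_pos ord_max hl.
have hd : forall k, (k <= m')%N -> (s k < N)%N.
  by move=> k hk; have := psn_mono (fun i => (l i : nat)) hk; rewrite -/s; lia.
have gval : forall k : 'I_m, (gmap l k : nat) = s k.
  by move=> k; rewrite ffunE inordK // hd // -ltnS.
have prevE : forall j : 'I_m, prev_u (gmap l) j = if (j : nat) is k.+1 then s k else 0%N.
  move=> [[|k] hk] //; rewrite prev_uE /= gval inordK //; lia.
apply/ffunP => i; case: (unliftP ord_max i) => [j ->|->].
- rewrite /hmap ext_lift; apply: val_inj => /=.
  rewrite (fdE (gmap l) (j : 'I_m)) gval prevE.
  have := psE (fun i => (l i : nat)) (lift ord_max j); rewrite lift_max -/s => ->.
  by case: j => [[|k] hk] /=; lia.
- rewrite /hmap ext_max; apply: val_inj; rewrite /= inordK gval /=; lia.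
Qed.

Lemma step3 : \sum_(l : {ffun 'I_m.+1 -> 'I_N.+1} | Pl p N l)
   \prod_(k < m) ((psn (fun i => (l i : nat)) (widen_ord (leqnSn m) k))%:R : rat)^-1
  = RHS_sum m N p.
Proof.
rewrite (reindex hmap); last first.
  exists gmap => [u|l]; rewrite inE => h; first by rewrite K2 in h; exact: K3.
  exact: K4.
rewrite /RHS_sum; apply: eq_big => u; first by rewrite K2.
move=> hu; apply: eq_bigr => k _; rewrite /hmap psn_ext; last by rewrite /= ltn_ord.
rewrite (K1 (Pu_lt _)) //; by rewrite -K2.
Qed.

End Step3.

Theorem lemma2p1 (n N p : nat) (hn : (2 <= n)%N) (hN : (1 <= N)%N)
  (hp : prime p) (hpN : (p %| N)%N) :
  Z n N p = (n`!)%:R / N%:R * RHS_sum n.-1 N p.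
Proof.
case: n hn => [|[|m']] // _.
case: N hN hpN => [|N'] // _ hpN.
have -> : Z m'.+2 N'.+1 p = Fs p N'.+1 m'.+2 N'.+1 by [].
rewrite FG.
have -> : Gs p N'.+1 m'.+2 N'.+1 = (N'.+1%:R)^-1 * RHS_sum m'.+1 N'.+1 p.
  rewrite -(@step3 p N' m' hpN) mulr_sumr /Gs; apply: eq_bigr => l hl.
  by rewrite big_ord_recr /= psn_full (Pl_sum hl) mulrC.
by rewrite mulrA.
Qed.
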